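(* Let $S$ be a numerical semigroup with minimal generators $a_1<a_2<\cdots<a_\nu$ ($\nu\ge 2$), multiplicity $\mu=a_1$ and conductor $c$, with $a_2>\frac{c+\mu}{3}$. Let $P=\{a_1,\dots,a_\nu\}$, $P_1=\{a\in P\setminus\{\mu\}: \tfrac13(c+\mu)<a<\tfrac12(c+\mu)\}$, $P_2=\{a\in P\setminus\{\mu\}: \tfrac12(c+\mu)\le a<\tfrac23(c+\mu)\}$, $q_i=|P_i|$, and let $\sigma$ be the maximal cardinality of an independent set of Apéry pairs. Then $$\frac{q_1(q_1+1)}{2}+\sigma\cdot\max\{q_1,q_2\}+\nu\ge\mu.$$
   Context: A numerical semigroup is a submonoid $S\subseteq\mathbb{N}$ with finite complement; $\nu$ is the number of minimal generators, $\mu$ the smallest one, $c$ the least integer with $c+\mathbb{N}\subseteq S$. $\mathrm{Ap}(S)=\{x\in S: x-\mu\notin S\}$. An Apéry pair is a pair $(a,b)\in P_1\times P_2$ with $a+b\in\mathrm{Ap}(S)$. A set $\{(a_i,b_i)\}_{i=1}^n$ of Apéry pairs is independent if $a_i\ne a_j$ and $b_i\ne b_j$ for all $i\ne j$. *)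

(* Defs.v *)
From mathcomp Require Import all_boot.
Set Implicit Arguments. Unset Strict Implicit. Unset Printing Implicit Defensive.

Definition numerical_semigroup (S : pred nat) : Prop :=
  S 0 /\ (forall x y, S x -> S y -> S (x + y)) /\
  exists N, forall n, N <= n -> S n.

Definition min_generator (S : pred nat) (a : nat) : Prop :=
  S a /\ 0 < a /\ ~ (exists x y, [/\ 0 < x, 0 < y, S x, S y & x + y = a]).

Definition is_conductor (S : pred nat) (c : nat) : Prop :=
  (forall n, c <= n -> S n) /\
  (forall c', (forall n, c' <= n -> S n) -> c <= c').

(* Apery set of S w.r.t. m: x in S with x - m not in S (x - m taken in Z). *)
Definition apery (S : pred nat) (m x : nat) : bool :=
  S x && ~~ ((m <= x) && S (x - m)).

Definition inP1 (mu c a : nat) : bool :=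
  [&& a != mu, c + mu < 3 * a & 2 * a < c + mu].
Definition inP2 (mu c a : nat) : bool :=
  [&& a != mu, c + mu <= 2 * a & 3 * a < 2 * (c + mu)].

Definition apery_pair (S : pred nat) (gens : seq nat) (mu c : nat)
    (p : nat * nat) : bool :=
  [&& p.1 \in gens, inP1 mu c p.1, p.2 \in gens, inP2 mu c p.2 &
      apery S mu (p.1 + p.2)].

Definition independent_apery (S : pred nat) (gens : seq nat) (mu c : nat)
    (s : seq (nat * nat)) : bool :=
  [&& all (apery_pair S gens mu c) s, uniq (map fst s) & uniq (map snd s)].

(* Main.v *)
Require Import Defs.
From mathcomp Require Import all_boot zify.
From Stdlib Require Import Classical.

Fixpoint pairsums (l : seq nat) : seq nat :=
  if l is x :: l' then [seq x + y | y <- l] ++ pairsums l' else [::].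

Lemma size_pairsums l : 2 * size (pairsums l) = size l * (size l + 1).
Proof.
elim: l => //= x l IH; rewrite size_cat size_map /=. nia.
Qed.

Lemma mem_pairsums l a b : a \in l -> b \in l -> a + b \in pairsums l.
Proof.
elim: l => // x l IH ab bl; change (a + b \in [seq x + y | y <- x :: l] ++ pairsums l).
rewrite mem_cat; case/predU1P: ab => [->|al]; case/predU1P: bl => [->|bl].
- by apply/orP; left; apply: map_f; rewrite inE eqxx.
- by apply/orP; left; apply: map_f; apply: mem_behead.
- by apply/orP; left; rewrite addnC; apply: map_f; apply: mem_behead.
- by rewrite IH ?orbT.
Qed.

Lemma apery_sub (S : pred nat) mu x y :
  (forall x y, S x -> S y -> S (x + y)) ->
  apery S mu (x + y) -> S x -> S y -> apery S mu x.
Proof.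
move=> Sadd /andP [_ h] Sx Sy; rewrite /apery Sx /=.
apply: contra h => /andP [le Sxm]; apply/andP; split; first by lia.
have -> : x + y - mu = (x - mu) + y by lia.
exact: Sadd.
Qed.

Lemma apery_lt (S : pred nat) mu c w :
  (forall n, c <= n -> S n) -> apery S mu w -> w < c + mu.
Proof.
move=> hc /andP [_ h]; rewrite ltnNge; apply: contra h => le.
by rewrite hc ?andbT; lia.
Qed.

Definition indep (E : seq (nat*nat)) (M : seq (nat*nat)) : bool :=
  [&& all (fun p => p \in E) M, uniq (map fst M) & uniq (map snd M)].

Lemma sumn_bound (T : Type) (f : T -> nat) (s : seq T) k :
  (forall x, f x <= k) -> sumn (map f s) <= size s * k.
Proof.
move=> H; elim: s => //= x s IH; rewrite mulSn; exact: leq_add.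
Qed.

Lemma bip (P : pred (nat*nat)) (A B : seq nat) (sig : nat) :
  uniq A -> uniq B ->
  let E := [seq p <- [seq (a,b) | a <- A, b <- B] | P p] in
  (exists M, indep E M /\ size M = sig) ->
  (forall M, indep E M -> size M <= sig) ->
  size E <= sig * maxn (size A) (size B).
Proof.
move=> uA uB E [M [/and3P [ME uAM uBM] sM]] Hmax.
have EP : forall e, e \in E -> [/\ P e, e.1 \in A & e.2 \in B].
  move=> e; rewrite mem_filter => /andP [Pe /allpairsP [[x y] [/= hx hy ee]]].
  by subst e; split.
set AM := map fst M; set BM := map snd M.
set A' := [seq x <- A | x \notin AM]; set B' := [seq y <- B | y \notin BM].
have hA : sig + size A' <= size A.
  rewrite -sM -(size_map fst M) -size_cat; apply: uniq_leq_size.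
    rewrite cat_uniq uAM filter_uniq // andbT; apply/hasPn => x.
    by rewrite mem_filter => /andP [].
  move=> x; rewrite mem_cat => /orP [/mapP [p pM ->]|]; last by rewrite mem_filter => /andP [].
  by case: (EP p (allP ME p pM)).
have hB : sig + size B' <= size B.
  rewrite -sM -(size_map snd M) -size_cat; apply: uniq_leq_size.
    rewrite cat_uniq uBM filter_uniq // andbT; apply/hasPn => x.
    by rewrite mem_filter => /andP [].
  move=> x; rewrite mem_cat => /orP [/mapP [p pM ->]|]; last by rewrite mem_filter => /andP [].
  by case: (EP p (allP ME p pM)).
set nbrOut := fun b => has (fun e => (e.2 == b) && (e.1 \notin AM)) E.
set star := fun p : nat * nat => if nbrOut p.2 then [seq (x, p.2) | x <- A'] else [seq (p.1, y) | y <- B'].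
set L := [seq (a,b) | a <- AM, b <- BM] ++ flatten (map star M).
have uE : uniq E.
  apply: filter_uniq; apply: allpairs_uniq => //.
  by move=> [? ?] [? ?] _ _.
have sL : size L <= sig * sig + sig * maxn (size A') (size B').
  rewrite /L size_cat size_allpairs !size_map sM size_flatten /shape -map_comp.
  rewrite leq_add2l -sM; apply: sumn_bound => p /=; rewrite /star.
  by case: (nbrOut p.2); rewrite size_map ?leq_maxl ?leq_maxr.
have EL : {subset E <= L}.
  move=> [x y] eE; case: (EP _ eE) => /= Pe xA yB.
  rewrite /L mem_cat.
  have [xAM|xAM] := boolP (x \in AM).
    have [yBM|yBM] := boolP (y \in BM).
      by apply/orP; left; apply/allpairsP; exists (x, y).
    apply/orP; right; apply/flatten_mapP.
    case/mapP: xAM => p pM xp; exists p => //.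
    rewrite /star; case hn: (nbrOut p.2); last first.
      by apply/mapP; exists y; [rewrite /B' mem_filter yBM yB | rewrite xp].
    exfalso; case/hasP: hn => e' e'E /andP [/eqP e'2 e'1].
    set R := rem p M.
    have pR := perm_to_rem pM.
    have pf := perm_map fst pR; have ps := perm_map snd pR.
    have uf : uniq (p.1 :: map fst R) by rewrite -(perm_uniq pf).
    have us : uniq (p.2 :: map snd R) by rewrite -(perm_uniq ps).
    have : size (e' :: (x, y) :: R) <= sig.
      apply: Hmax; rewrite /indep /= eE e'E.
      have RE : all (fun q => q \in E) R.
        by apply/allP => q /mem_rem qM; exact: (allP ME).
      rewrite RE /=.
      rewrite xp e'2.
      have -> : e'.1 \in p.1 :: map fst R = false.
        by rewrite -(perm_mem pf); apply/negbTE.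
      move: uf => /= /andP [-> ->] /=.
      have yR : y \in map snd R = false.
        apply/negbTE; apply: contra yBM => /mapP [q qR ->].
        by apply: map_f; apply: mem_rem qR.
      rewrite yR /=; move: us => /= /andP [pR' ->]; rewrite andbT inE negb_or pR' andbT.
      apply/negP => /eqP py; apply: (negP yBM); rewrite -py.
      exact: map_f.
    by rewrite /= /R size_rem // sM; case: (sig) sM => //= ? ?; rewrite ltnn.
  have yBM : y \in BM.
    apply/negPn/negP => yBM.
    have : size ((x, y) :: M) <= sig.
      apply: Hmax; rewrite /indep /= eE ME /= xAM yBM.
      by rewrite -/AM -/BM uAM uBM.
    by rewrite /= sM ltnn.
  apply/orP; right; apply/flatten_mapP.
  case/mapP: yBM => p pM yp; exists p => //.
  rewrite /star.
  have -> : nbrOut p.2.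
    by apply/hasP; exists (x, y) => //=; rewrite yp eqxx xAM.
  apply/mapP; exists x; first by rewrite /A' mem_filter xAM.
  by rewrite yp.
have := uniq_leq_size uE EL.
move=> h; apply: (leq_trans h); apply: (leq_trans sL).
rewrite -mulnDr leq_mul2l; apply/orP; right.
lia.
Qed.

Theorem corollary4p2 (S : pred nat) (gens : seq nat) (c sigma : nat) :
  numerical_semigroup S ->
  (forall a, a \in gens <-> min_generator S a) ->
  sorted ltn gens ->
  2 <= size gens ->
  is_conductor S c ->
  c + nth 0 gens 0 < 3 * nth 0 gens 1 ->
  (exists s, independent_apery S gens (nth 0 gens 0) c s /\ size s = sigma) ->
  (forall s, independent_apery S gens (nth 0 gens 0) c s -> size s <= sigma) ->
  let mu := nth 0 gens 0 in
  let q1 := count (inP1 mu c) gens in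
  let q2 := count (inP2 mu c) gens in
  q1 * (q1 + 1) %/ 2 + sigma * maxn q1 q2 + size gens >= mu.
Proof.
move=> [S0 [Sadd _]] hgen hsort hsz [hc _] h3 [s0 [hs0 hs0sz]] hmax /=.
set mu := nth 0 gens 0; set q1 := count (inP1 mu c) gens; set q2 := count (inP2 mu c) gens.
have uG : uniq gens by apply: sorted_uniq hsort; [exact: ltn_trans | exact: ltnn].
have muG : mu \in gens by rewrite /mu mem_nth // (leq_trans _ hsz).
have [Smu [mu0 _]] := (proj1 (hgen mu) muG).
set g1 := nth 0 gens 1.
have ge1 : forall a, a \in gens -> a != mu -> g1 <= a.
  move=> a aG amu; have ia := index_mem a gens; rewrite aG in ia.
  have na := nth_index 0 aG.
  case: (ltngtP (index a gens) 1) => h.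
  - have i0 : index a gens = 0 by lia.
    by move: amu; rewrite -na i0 eqxx.
  - have H := @sorted_ltn_nth _ _ ltn_trans 0 _ hsort 1 (index a gens).
    rewrite na /= in H; apply: ltnW; apply: H => //; rewrite inE /=; lia.
  - by rewrite -na h.
have key3 : forall w, apery S mu w -> 0 < w -> c + mu < 3 * w.
  elim/ltn_ind => w IH aw w0.
  case: (classic (exists x y, [/\ 0 < x, 0 < y, S x, S y & x + y = w])).
  - move=> [x [y [x0 y0 Sx Sy xyw]]].
    have ax : apery S mu x by apply: (@apery_sub S mu x y Sadd _ Sx Sy); rewrite xyw.
    have ay : apery S mu y by apply: (@apery_sub S mu y x Sadd _ Sy Sx); rewrite addnC xyw.
    have hx : x < w by clear -y0 xyw; lia.
    have hy : y < w by clear -x0 xyw; lia.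
    have := IH x hx ax x0; have := IH y hy ay y0; clear -xyw; lia.
  - move=> nd.
    have wG : w \in gens.
      apply/(proj2 (hgen w)); split; first by case/andP: aw.
      by split.
    have wmu : w != mu.
      apply/eqP => wm; move: aw; rewrite /apery wm leqnn subnn S0 /=.
      by rewrite andbF.
    have := ge1 w wG wmu; clear -h3; rewrite /mu /g1; lia.
have isgen : forall x, apery S mu x -> 0 < x -> 3 * x < 2 * (c + mu) ->
    x \in gens /\ x != mu.
  move=> x ax x0 x2.
  case: (classic (exists u v, [/\ 0 < u, 0 < v, S u, S v & u + v = x])).
  - move=> [u [v [u0 v0 Su Sv uvx]]].
    have au : apery S mu u by apply: (@apery_sub S mu u v Sadd _ Su Sv); rewrite uvx.
    have av : apery S mu v by apply: (@apery_sub S mu v u Sadd _ Sv Su); rewrite addnC uvx.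
    have := key3 u au u0; have := key3 v av v0; clear -uvx x2; lia.
  - move=> nd.
    have wG : x \in gens.
      apply/(proj2 (hgen x)); split; first by case/andP: ax.
      by split.
    split => //; apply/eqP => wm; move: ax; rewrite /apery wm leqnn subnn S0 /=.
    by rewrite andbF.
set A := [seq a <- gens | inP1 mu c a].
set B := [seq b <- gens | inP2 mu c b].
set E := [seq p <- [seq (a,b) | a <- A, b <- B] | apery_pair S gens mu c p].
have hE : size E <= sigma * maxn (size A) (size B).
  apply: bip; rewrite ?filter_uniq //.
  - exists s0; split => //; move: hs0 => /and3P [hall uf us]; rewrite /indep uf us /= !andbT.
    apply/allP => p ps; have := allP hall p ps => ap.
    rewrite mem_filter ap /=; case/and5P: ap => p1G p1P p2G p2P _.
    apply/allpairsP; exists p; rewrite /A /B !mem_filter p1G p1P p2G p2P.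
    by case: (p).
  - move=> M /and3P [ME uf us]; apply: hmax; rewrite /independent_apery uf us /= !andbT.
    by apply/allP => p /(allP ME); rewrite mem_filter => /andP [].
set L := 0 :: behead gens ++ pairsums A ++ map (fun p => p.1 + p.2) E.
set ApL := [seq w <- iota 0 (c + mu) | apery S mu w].
have gE : gens = mu :: behead gens by rewrite /mu; case: (gens) hsz.
have sub : {subset ApL <= L}.
  move=> w; rewrite mem_filter => /andP [aw _].
  case: (posnP w) => [->|w0]; first by rewrite inE eqxx.
  have wlt := @apery_lt S mu c w hc aw.
  rewrite inE mem_cat mem_cat; apply/orP; right.
  case: (classic (exists x y, [/\ 0 < x, 0 < y, S x, S y & x + y = w])); last first.
    move=> nd.
    have wG : w \in gens.
      apply/(proj2 (hgen w)); split; first by case/andP: aw.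
      by split.
    have wmu : w != mu.
      apply/eqP => wm; move: aw; rewrite /apery wm leqnn subnn S0 /=.
      by rewrite andbF.
    have : w \in mu :: behead gens by rewrite -gE.
    by rewrite inE (negbTE wmu) /= => ->.
  move=> [x [y [x0 y0 Sx Sy xyw]]].
  have ax : apery S mu x by apply: (@apery_sub S mu x y Sadd _ Sx Sy); rewrite xyw.
  have ay : apery S mu y by apply: (@apery_sub S mu y x Sadd _ Sy Sx); rewrite addnC xyw.
  have kx := key3 x ax x0; have ky := key3 y ay y0.
  have [xG xmu] : x \in gens /\ x != mu.
    apply: isgen => //; clear -ky wlt xyw; lia.
  have [yG ymu] : y \in gens /\ y != mu.
    apply: isgen => //; clear -kx wlt xyw; lia.
  have fin : forall a b, a \in gens -> a != mu -> b \in gens -> b != mu ->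
      c + mu < 3 * a -> c + mu < 3 * b -> a <= b -> a + b = w ->
      [|| w \in behead gens, w \in pairsums A | w \in [seq p.1 + p.2 | p <- E]].
    move=> a b aG amu bG bmu ka kb ab abw.
    have aP : inP1 mu c a by rewrite /inP1 amu ka /=; clear -ab abw wlt; lia.
    case: (ltnP (2 * b) (c + mu)) => hb.
      have bP : inP1 mu c b by rewrite /inP1 bmu kb /=.
      by rewrite -abw mem_pairsums ?orbT // mem_filter ?aP ?bP.
    have bP : inP2 mu c b by rewrite /inP2 bmu hb /=; clear -ka abw wlt; lia.
    apply/orP; right; apply/orP; right; rewrite -abw.
    apply: (map_f (fun p : nat * nat => p.1 + p.2) (x := (a, b))).
    rewrite mem_filter /apery_pair /= aG aP bG bP abw aw /=.
    by apply/allpairsP; exists (a, b); rewrite /= !mem_filter aP aG bP bG.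
  case: (leqP x y) => xy.
    exact: (fin x y xG xmu yG ymu kx ky xy xyw).
  by apply: (fin y x yG ymu xG xmu ky kx (ltnW xy)); rewrite addnC.
have lower : mu <= size ApL.
  have : {subset iota 0 mu <= map (fun x => x %% mu) ApL}.
    move=> r; rewrite mem_iota add0n /= => rmu.
    have exP : exists k, S (r + mu * k).
      by exists c; apply: hc; clear -mu0; nia.
    case: (ex_minnP exP) => k Sk kmin.
    have ak : apery S mu (r + mu * k).
      rewrite /apery Sk /=; apply/negP => /andP [le Sm].
      have k0 : 0 < k by case: (k) le => //; rewrite muln0 addn0 leqNgt rmu.
      have : k <= k.-1.
        apply: kmin; have -> : r + mu * k.-1 = r + mu * k - mu.
          by clear -k0; case: (k) k0 => // k' _; rewrite mulnS /=; lia.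
        exact: Sm.
      by clear -k0; lia.
    apply/mapP; exists (r + mu * k).
      by rewrite mem_filter ak mem_iota /= add0n; exact: (@apery_lt S mu c _ hc ak).
    by rewrite addnC mulnC modnMDl modn_small.
  move/(uniq_leq_size (iota_uniq 0 mu)); rewrite size_iota size_map.
  done.
have upper : size ApL <= size L.
  by apply: uniq_leq_size => //; rewrite filter_uniq // iota_uniq.
have sA : size A = q1 by rewrite size_filter.
have sB : size B = q2 by rewrite size_filter.
have ps : size (pairsums A) = q1 * (q1 + 1) %/ 2.
  by have := size_pairsums A; rewrite sA => <-; rewrite mulKn.
move: upper; rewrite /L /= !size_cat size_map ps size_behead.
move: hE; rewrite sA sB.
move: lower hsz; set m := sigma * maxn q1 q2; set t := q1 * (q1 + 1) %/ 2.
clear; lia.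
Qed.
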